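(* Let $k\ge 3$ be an integer and $F$ a field admitting a primitive $(k-1)$-th root of unity. Let $A,B$ be associative $F$-algebras and $\varphi:A\to B$ an $F$-linear map with $\varphi(P_k(A))\subseteq P_k(B)$. If $e,f\in P_k(A)$ satisfy $ef=fe=0$, then $\varphi(e)\varphi(f)=\varphi(f)\varphi(e)$. If moreover $\mathrm{char}(F)\nmid k$, then $\varphi(e)\varphi(f)=\varphi(f)\varphi(e)=0$.
   Context: For a ring $A$ and an integer $k\ge 2$, $P_k(A)=\{a\in A: a^k=a\}$ is the set of $k$-potents. *)

(* Defs.v *)
From HB Require Import structures.
From mathcomp Require Import all_boot all_order all_algebra.
Set Implicit Arguments. Unset Strict Implicit. Unset Printing Implicit Defensive.
Import Order.TTheory GRing.Theory Num.Theory.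
Local Open Scope ring_scope.

Record nuAlgebra (F : fieldType) := NuAlgebra {
  nua_sort :> lmodType F;
  nua_mul : nua_sort -> nua_sort -> nua_sort;
  nua_mulA : associative nua_mul;
  nua_mulDl : left_distributive nua_mul +%R;
  nua_mulDr : right_distributive nua_mul +%R;
  nua_scalerAl : forall (a : F) (x y : nua_sort), nua_mul (a *: x) y = a *: nua_mul x y;
  nua_scalerAr : forall (a : F) (x y : nua_sort), nua_mul x (a *: y) = a *: nua_mul x y
}.

(* nua_pow A x n = x^(n+1)  (positive powers; no unit needed) *)
Fixpoint nua_pow (F : fieldType) (A : nuAlgebra F) (x : A) (n : nat) : A :=
  match n with
  | 0 => x
  | n'.+1 => nua_mul x (nua_pow x n')
  end.

Definition nua_expn (F : fieldType) (A : nuAlgebra F) (x : A) (k : nat) : A :=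
  nua_pow x k.-1.

Definition kpotent (F : fieldType) (A : nuAlgebra F) (k : nat) (a : A) : Prop :=
  nua_expn a k = a.

(* Main.v *)
Require Import Defs.
From HB Require Import structures.
From mathcomp Require Import all_boot all_order all_algebra.
From mathcomp Require Import zify.
Import GRing.Theory.
Local Open Scope ring_scope.
Local Notation mul := nua_mul.
Local Notation pow := nua_pow.

Lemma nmul0r (F : fieldType) (B : nuAlgebra F) (x : B) : mul 0 x = 0.
Proof. have h : mul 0 x + mul 0 x = mul 0 x + 0 by rewrite -nua_mulDl !addr0. exact: (addrI _ h). Qed.
Lemma nmulr0 (F : fieldType) (B : nuAlgebra F) (x : B) : mul x 0 = 0.
Proof. have h : mul x 0 + mul x 0 = mul x 0 + 0 by rewrite -nua_mulDr !addr0. exact: (addrI _ h). Qed.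
Lemma nmulNr (F : fieldType) (B : nuAlgebra F) (x y : B) : mul (- x) y = - mul x y.
Proof. by apply/eqP; rewrite -subr_eq0 opprK -nua_mulDl addrC subrr nmul0r. Qed.
Lemma nmulrN (F : fieldType) (B : nuAlgebra F) (x y : B) : mul x (- y) = - mul x y.
Proof. by apply/eqP; rewrite -subr_eq0 opprK -nua_mulDr addrC subrr nmulr0. Qed.
Lemma nmulBr (F : fieldType) (B : nuAlgebra F) (x y z : B) : mul x (y - z) = mul x y - mul x z.
Proof. by rewrite nua_mulDr nmulrN. Qed.
Lemma nmulBl (F : fieldType) (B : nuAlgebra F) (x y z : B) : mul (y - z) x = mul y x - mul z x.
Proof. by rewrite nua_mulDl nmulNr. Qed.
Lemma nmul_sumr (F : fieldType) (B : nuAlgebra F) (x : B) I (r : seq I) (P : pred I) (G : I -> B) :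
  mul x (\sum_(i <- r | P i) G i) = \sum_(i <- r | P i) mul x (G i).
Proof. by elim/big_rec2: _ => [|i y1 y2 _ <-]; rewrite ?nmulr0 // nua_mulDr. Qed.
Lemma nmul_suml (F : fieldType) (B : nuAlgebra F) (x : B) I (r : seq I) (P : pred I) (G : I -> B) :
  mul (\sum_(i <- r | P i) G i) x = \sum_(i <- r | P i) mul (G i) x.
Proof. by elim/big_rec2: _ => [|i y1 y2 _ <-]; rewrite ?nmul0r // nua_mulDl. Qed.

Lemma pow_mulr (F : fieldType) (B : nuAlgebra F) (x : B) n : pow x n.+1 = mul (pow x n) x.
Proof. elim: n => [//|n IH]; by rewrite -[pow x n.+2]/(mul x (pow x n.+1)) [in LHS]IH nua_mulA. Qed.

Lemma mul_pow_r0 (F : fieldType) (B : nuAlgebra F) (x y : B) n :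
  mul x y = 0 -> mul x (pow y n) = 0.
Proof. by case: n => [//|n] /= h; rewrite nua_mulA h nmul0r. Qed.
Lemma mul_pow_l0 (F : fieldType) (B : nuAlgebra F) (x y : B) n :
  mul y x = 0 -> mul (pow y n) x = 0.
Proof. by case: n => [//|n] h; rewrite pow_mulr -nua_mulA h nmulr0. Qed.

Lemma pow_orth (F : fieldType) (B : nuAlgebra F) (e f : B) (t : F) n :
  mul e f = 0 -> mul f e = 0 ->
  pow (e + t *: f) n = pow e n + t ^+ n.+1 *: pow f n.
Proof.
move=> ef fe; elim: n => [|n IH]; first by rewrite expr1.
rewrite /= IH nua_mulDl !nua_mulDr !nua_scalerAl !nua_scalerAr.
rewrite (@mul_pow_r0 _ _ _ _ n ef) (@mul_pow_r0 _ _ _ _ n fe).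
by rewrite scaler0 addr0 scaler0 add0r scalerA -!exprS.
Qed.

Lemma nua_mulrn (F : fieldType) (B : nuAlgebra F) (x y : B) j : mul x (y *+ j) = mul x y *+ j.
Proof. by rewrite -!scaler_nat nua_scalerAr. Qed.

Fixpoint ncoef (F : fieldType) (B : nuAlgebra F) (a b : B) (n j : nat) : B :=
  match n with
  | 0 => if j == 0%N then a else if j == 1%N then b else 0
  | n'.+1 => mul a (ncoef F B a b n' j) + (if j is j'.+1 then mul b (ncoef F B a b n' j') else 0)
  end.
Arguments ncoef {F B}.

Lemma ncoef0 (F : fieldType) (B : nuAlgebra F) (a b : B) n : ncoef a b n 0 = pow a n.
Proof. by elim: n => [//|n /= ->]; rewrite addr0. Qed.

Lemma ncoef_big (F : fieldType) (B : nuAlgebra F) (a b : B) n j : (n.+2 <= j)%N -> ncoef a b n j = 0.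
Proof.
elim: n j => [|n IH] [|j] //=; first by case: j.
by move=> h; rewrite IH ?nmulr0 ?IH ?nmulr0 ?addr0 // ltnW.
Qed.

Lemma ncoef_top (F : fieldType) (B : nuAlgebra F) (a b : B) n : ncoef a b n n.+1 = pow b n.
Proof. by elim: n => [//|n /= ->]; rewrite ncoef_big // nmulr0 add0r. Qed.

Lemma expand (F : fieldType) (B : nuAlgebra F) (a b : B) (t : F) n :
  pow (a + t *: b) n = \sum_(j < n.+2) t ^+ j *: ncoef a b n j.
Proof.
elim: n => [|n IH].
  by rewrite !big_ord_recr big_ord0 /= add0r expr0 scale1r expr1.
rewrite /= IH nua_mulDl nmul_sumr nmul_sumr.
rewrite [in RHS](eq_bigr (fun j : 'I_n.+3 => t ^+ j *: mul a (ncoef a b n j) +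
   t ^+ j *: (if nat_of_ord j is j'.+1 then mul b (ncoef a b n j') else 0))); last first.
  by move=> j _; rewrite scalerDr.
rewrite big_split /=; congr (_ + _).
  rewrite [in RHS]big_ord_recr /= ncoef_big // nmulr0 scaler0 addr0.
  by apply: eq_bigr => j _; rewrite nua_scalerAr.
rewrite [in RHS]big_ord_recl /= scaler0 add0r.
apply: eq_bigr => j _; rewrite nua_scalerAl nua_scalerAr scalerA -exprS.
by rewrite /bump /=.
Qed.
Arguments pow_mulr {F B}.
Arguments pow_orth {F B}.
Arguments expand {F B}.
Arguments ncoef_top {F B}.
Arguments ncoef0 {F B}.

Lemma lin_rec (F : fieldType) (B : nuAlgebra F) (a b : B) n :
  ncoef a b n.+1 1%N = mul a (ncoef a b n 1%N) + mul b (pow a n).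
Proof. by rewrite /= ncoef0. Qed.
Arguments lin_rec {F B}.

Lemma lin_recr (F : fieldType) (B : nuAlgebra F) (a b : B) n :
  ncoef a b n.+1 1%N = mul (ncoef a b n 1%N) a + mul (pow a n) b.
Proof.
elim: n => [|n IH]; first by rewrite /= addrC.
rewrite lin_rec [in LHS]IH [in RHS]lin_rec [in LHS](pow_mulr a n) nua_mulDr nua_mulDl !nua_mulA.
by rewrite -!addrA; congr (_ + _); rewrite addrC.
Qed.
Arguments lin_recr {F B}.

Lemma lin_comm (F : fieldType) (B : nuAlgebra F) (a b : B) n :
  pow a n.+1 = a -> ncoef a b n.+1 1%N = 0 -> mul a b = mul b a.
Proof.
move=> ha h0.
have h1 := lin_rec a b n.+1; have h2 := lin_recr a b n.+1.
rewrite h0 nmulr0 add0r ha in h1; rewrite h0 nmul0r add0r ha in h2.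
by rewrite -h2 h1.
Qed.
Arguments lin_comm {F B}.

Lemma comm_pow (F : fieldType) (B : nuAlgebra F) (a b : B) n :
  mul a b = mul b a -> mul b (pow a n) = mul (pow a n) b.
Proof.
move=> h; elim: n => [//|n IH].
by rewrite /= nua_mulA -h -nua_mulA IH nua_mulA.
Qed.
Arguments comm_pow {F B}.

Lemma lin_commE (F : fieldType) (B : nuAlgebra F) (a b : B) n :
  mul a b = mul b a -> ncoef a b n.+1 1%N = mul (pow a n) b *+ n.+2.
Proof.
move=> h; elim: n => [|n IH]; first by rewrite lin_rec /= -h mulr2n.
by rewrite lin_rec IH nua_mulrn comm_pow // nua_mulA -mulrSr.
Qed.
Arguments lin_commE {F B}.

Lemma geom (F : fieldType) (m : nat) (w : F) e :
  m.-primitive_root w ->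
  \sum_(i < m) (w ^+ e) ^+ i = if (m %| e)%N then m%:R else 0.
Proof.
move=> pw; case: ifP => he.
  move: he; rewrite (prim_order_dvd pw) => /eqP ->.
  by rewrite (eq_bigr (fun _ => 1)) ?sumr_const ?card_ord // => i _; rewrite expr1n.
have hne : w ^+ e - 1 != 0 by rewrite subr_eq0 -(prim_order_dvd pw) he.
have := subrX1 (w ^+ e) m.
rewrite exprAC (prim_expr_order pw) expr1n subrr => /esym/eqP.
by rewrite mulf_eq0 (negbTE hne) /= => /eqP.
Qed.

Lemma prim_char (F : fieldType) (m : nat) (w : F) :
  m.-primitive_root w -> m%:R != 0 :> F.
Proof.
move=> pw; apply/negP => H.
have m0 := prim_order_gt0 pw.
have [p pch] := natf0_pchar m0 H.
have pdm : (p %| m)%N by rewrite (dvdn_pcharf pch).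
have pp := pcharf_prime pch.
have p1 := prime_gt1 pp.
set q := (m %/ p)%N.
have qp : (q * p)%N = m by rewrite divnK.
have hq : w ^+ q != 1.
  rewrite -(prim_order_dvd pw); apply/negP => /dvdn_leq.
  have q0 : (0 < q)%N by rewrite divn_gt0 ?(ltnW p1) // dvdn_leq.
  move=> /(_ q0). rewrite -qp. nia.
have := pFrobenius_autB_comm pch (commr1 (w ^+ q)).
rewrite !pFrobenius_autE expr1n -exprM qp (prim_expr_order pw) subrr.
by move/eqP; rewrite expf_eq0 subr_eq0 (negbTE hq) andbF.
Qed.
Arguments prim_char {F m w}.
Arguments ncoef {F B} a b n j : simpl never.

Theorem lemma7p2 (F : fieldType) (k : nat) (A B : nuAlgebra F)
  (phi : {linear nua_sort A -> nua_sort B}) :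
  (3 <= k)%N ->
  (exists w : F, (k.-1).-primitive_root w) ->
  (forall a : A, kpotent k a -> kpotent k (phi a)) ->
  forall e f : A, kpotent k e -> kpotent k f ->
    nua_mul e f = 0 -> nua_mul f e = 0 ->
    nua_mul (phi e) (phi f) = nua_mul (phi f) (phi e) /\
    ((forall p : nat, p \in [pchar F] -> ~~ (p %| k)%N) ->
       nua_mul (phi e) (phi f) = 0 /\ nua_mul (phi f) (phi e) = 0).
Proof.
move=> k3 [w pw] hphi e f ke kf ef fe.
have [n kn] : exists n, k = n.+3 by exists (k - 3)%N; lia.
subst k; rewrite /= in pw.
have ha : nua_pow (phi e) n.+2 = phi e by apply: hphi.
have hb : nua_pow (phi f) n.+2 = phi f by apply: hphi.
have {}ke : nua_pow e n.+2 = e := ke.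
have {}kf : nua_pow f n.+2 = f := kf.
set a := phi e in ha *; set b := phi f in hb *.
have H i : nua_pow (a + w ^+ i *: b) n.+2 = a + w ^+ i *: b.
  have := hphi (e + w ^+ i *: f); rewrite /kpotent /nua_expn linearD linearZ.
  apply; change (nua_pow (e + w ^+ i *: f) n.+2 = e + w ^+ i *: f); by rewrite pow_orth // ke kf -exprM mulnC exprM exprS (prim_expr_order pw) mulr1.
have S1 : \sum_(i < n.+2) (w ^+ i) ^+ n.+1 *: nua_pow (a + w ^+ i *: b) n.+2
          = n.+2%:R *: b.
  rewrite (eq_bigr (fun i : 'I_n.+2 => (w ^+ n.+1) ^+ i *: a + (w ^+ n.+2) ^+ i *: b)); last first.
    by move=> i _; rewrite H scalerDr scalerA -exprSr !(exprAC w i).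
  rewrite big_split /= -!scaler_suml !geom // gtnNdvd // scale0r add0r.
  by rewrite dvdnn.
have S2 : \sum_(i < n.+2) (w ^+ i) ^+ n.+1 *: nua_pow (a + w ^+ i *: b) n.+2
          = \sum_(j < n.+4) (if (n.+2 %| j + n.+1)%N then n.+2%:R else 0) *: ncoef a b n.+2 j.
  rewrite (eq_bigr (fun i : 'I_n.+2 => \sum_(j < n.+4) ((w ^+ (j + n.+1)) ^+ i) *: ncoef a b n.+2 j)); last first.
    move=> i _; rewrite expand scaler_sumr; apply: eq_bigr => j _.
    by rewrite scalerA -exprD exprAC addnC.
  rewrite exchange_big /=; apply: eq_bigr => j _.
  rewrite -scaler_suml geom //.
have c1 : ncoef a b n.+2 1%N = 0.
  move: S2; rewrite S1 big_ord_recr big_ord_recl big_ord_recl.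
  rewrite big1; last first.
    move=> j _.
    have -> : (bump 0 (bump 0 j) + n.+1 = j.+1 + n.+2)%N by rewrite /bump /=; lia.
    rewrite dvdn_addl // gtnNdvd ?scale0r //; by rewrite ltnS ltn_ord.
  rewrite /= !addr0 gtnNdvd // scale0r add0r dvdnn.
  have -> : (n.+3 + n.+1 = n.+2 + n.+2)%N by lia.
  rewrite dvdn_addr // dvdnn ncoef_top hb.
  move/eqP; rewrite eq_sym -subr_eq0 addrK.
  by rewrite scaler_eq0 (negbTE (prim_char pw)) /= => /eqP.
have cab : nua_mul a b = nua_mul b a := lin_comm a b n.+1 ha c1.
split=> // hk.
have k0 : n.+3%:R != 0 :> F.
  apply/negP => Hk; have [p pch] := natf0_pchar (isT : (0 < n.+3)%N) Hk.
  by have := hk p pch; rewrite (dvdn_pcharf pch) Hk.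
have := lin_commE a b n.+1 cab; rewrite c1 => /esym/eqP.
rewrite -scaler_nat scaler_eq0 (negbTE k0) /= => /eqP h0.
have ab0 : nua_mul a b = 0.
  by rewrite -{1}ha /= -nua_mulA h0 nmulr0.
by rewrite -cab ab0.
Qed.
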